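(* Let $f\in\mathbb{K}[[\underline{x}]][y]$ be a monic polynomial of degree $n$ which is prepared. Then $F(X_1,\dots,X_e,y)=f(X_1,X_2X_1,\dots,X_eX_1,y)\in\mathbb{K}[[\underline{X}]][y]$ is a quasi-ordinary polynomial.
   Context: $\mathbb{K}$ is an algebraically closed field of characteristic $0$, $\underline{x}=(x_1,\dots,x_e)$, $\underline{X}=(X_1,\dots,X_e)$. Write the $y$-discriminant of $f$ as $\Delta(\underline{x})=\sum_{d\ge0}u_d(\underline{x})$ with $u_d$ homogeneous of degree $d$, and let $a=\min\{d: u_d\neq0\}$. $f$ is called prepared if the coefficient $c_a$ of $x_1^a$ in $u_a$ is nonzero. A monic polynomial in $\mathbb{K}[[\underline{X}]][y]$ is quasi-ordinary if its $y$-discriminant is of the form $\underline{X}^{\alpha}\varepsilon(\underline{X})$ with $\alpha\in\mathbb{N}^e$ and $\varepsilon$ a unit of $\mathbb{K}[[\underline{X}]]$. *)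

(* Defs.v *)
From HB Require Import structures.
From mathcomp Require Import all_boot all_algebra.
From mathcomp Require Import boolp.
From mathcomp Require Import mpoly.

Set Implicit Arguments.
Unset Strict Implicit.
Unset Printing Implicit Defensive.

Import GRing.Theory.
Local Open Scope ring_scope.

(* The ring R[[x_1,...,x_e]] of formal power series in e variables.   *)
Section PowerSeries.
Variables (R : comNzRingType) (e : nat).

Record mps := MPS { mpscoef : 'X_{1..e} -> R }.

HB.instance Definition _ := gen_eqMixin mps.
HB.instance Definition _ := gen_choiceMixin mps.

Lemma mps_ext (f g : mps) : mpscoef f =1 mpscoef g -> f = g.
Proof. by case: f g => f [g] /= H; congr MPS; apply: funext. Qed.

Definition mps0 := MPS (fun _ => 0).
Definition mpsD f g := MPS (fun m => mpscoef f m + mpscoef g m).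
Definition mpsN f := MPS (fun m => - mpscoef f m).

Lemma mpsDA : associative mpsD.
Proof. by move=> f g h; apply: mps_ext => m /=; rewrite addrA. Qed.
Lemma mpsDC : commutative mpsD.
Proof. by move=> f g; apply: mps_ext => m /=; rewrite addrC. Qed.
Lemma mps0D : left_id mps0 mpsD.
Proof. by move=> f; apply: mps_ext => m /=; rewrite add0r. Qed.
Lemma mpsND : left_inverse mps0 mpsN mpsD.
Proof. by move=> f; apply: mps_ext => m /=; rewrite addNr. Qed.

HB.instance Definition _ := GRing.isZmodule.Build mps mpsDA mpsDC mps0D mpsND.

Definition mps_trunc (D : nat) (f : mps) : {mpoly R[e]} :=
  \sum_(k : 'X_{1..e < D}) mpscoef f k *: 'X_[k].

Lemma mcoeff_trunc D f m :
  (mps_trunc D f)@_m = if (mdeg m < D)%N then mpscoef f m else 0.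
Proof.
rewrite /mps_trunc raddf_sum /=.
under eq_bigr => k _ do rewrite mcoeffZ mcoeffX.
case: ifP => Hm.
  rewrite (bigD1 (BMultinom Hm)) //= eqxx mulr1 big1 ?addr0 // => k Hk.
  case: eqP => [Ekm|]; last by rewrite mulr0.
  by case/eqP: Hk; apply: val_inj.
rewrite big1 // => k _; case: eqP => [Ekm|]; last by rewrite mulr0.
by move: (bmdeg k); rewrite Ekm Hm.
Qed.

Lemma mcoeffM_low (p p' q q' : {mpoly R[e]}) m :
  (forall k, (mdeg k <= mdeg m)%N -> p@_k = p'@_k) ->
  (forall k, (mdeg k <= mdeg m)%N -> q@_k = q'@_k) ->
  (p * q)@_m = (p' * q')@_m.
Proof.
move=> Hp Hq; rewrite !mcoeffM; apply: eq_bigr => k /eqP Hk.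
have Hd : mdeg m = (mdeg k.1 + mdeg k.2)%N by rewrite {1}Hk mdegD.
rewrite Hp ?Hq //; apply: (leq_trans _ (eq_leq (esym Hd)));
  [exact: leq_addl | exact: leq_addr].
Qed.

Definition mpsM f g :=
  MPS (fun m => (mps_trunc (mdeg m).+1 f * mps_trunc (mdeg m).+1 g)@_m).

Lemma mpsM_trunc f g D m : (mdeg m < D)%N ->
  mpscoef (mpsM f g) m = (mps_trunc D f * mps_trunc D g)@_m.
Proof.
move=> HD; apply: mcoeffM_low => k hk; rewrite !mcoeff_trunc ltnS hk;
  by rewrite (leq_ltn_trans hk HD).
Qed.

Lemma trunc_mpsM_low f g D k : (mdeg k < D)%N ->
  (mps_trunc D (mpsM f g))@_k = (mps_trunc D f * mps_trunc D g)@_k.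
Proof. by move=> hk; rewrite mcoeff_trunc hk (mpsM_trunc _ _ hk). Qed.

Definition mps1 := MPS (fun m => (m == 0%MM)%:R).

Lemma mpsMA : associative mpsM.
Proof.
move=> f g h; apply: mps_ext => m.
rewrite (mpsM_trunc _ _ (ltnSn (mdeg m))) [RHS](mpsM_trunc _ _ (ltnSn (mdeg m))).
set D := (mdeg m).+1.
transitivity ((mps_trunc D f * (mps_trunc D g * mps_trunc D h))@_m).
  apply: mcoeffM_low => // k hk.
  by rewrite trunc_mpsM_low // ltnS.
rewrite mulrA; apply: mcoeffM_low => // k hk.
by rewrite trunc_mpsM_low // ltnS.
Qed.

Lemma mpsMC : commutative mpsM.
Proof. by move=> f g; apply: mps_ext => m /=; rewrite mulrC. Qed.

Lemma mps1M : left_id mps1 mpsM.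
Proof.
move=> f; apply: mps_ext => m /=.
transitivity ((1 * mps_trunc (mdeg m).+1 f)@_m).
  apply: mcoeffM_low => // k hk; rewrite mcoeff_trunc mcoeff1 ltnS hk /=.
  done.
by rewrite mul1r mcoeff_trunc ltnSn.
Qed.

Lemma mpsMDl : left_distributive mpsM mpsD.
Proof.
move=> f g h; apply: mps_ext => m /=.
rewrite -mcoeffD -mulrDl; apply: mcoeffM_low => // k hk.
by rewrite mcoeffD !mcoeff_trunc /=; case: ifP; rewrite ?addr0.
Qed.

Lemma mps1_neq0 : mps1 != 0.
Proof.
apply/eqP => H; have := congr1 (fun f => mpscoef f 0%MM) H.
by rewrite /= eqxx => /eqP; rewrite oner_eq0.
Qed.

HB.instance Definition _ :=
  GRing.Zmodule_isComNzRing.Build mps mpsMA mpsMC mps1M mpsMDl mps1_neq0.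

Definition mpsX (i : 'I_e) : mps := MPS (fun m => (m == mnm1 i)%:R).
Definition mpsXm (a : 'X_{1..e}) : mps := \prod_(i < e) mpsX i ^+ a i.

Definition mps_unit (u : mps) : Prop := exists v : mps, u * v = 1.

Definition mps_hcomp (d : nat) (f : mps) : mps :=
  MPS (fun m => if mdeg m == d then mpscoef f m else 0).

End PowerSeries.

Definition ydisc (A : comNzRingType) (f : {poly A}) : A :=
  (-1) ^+ 'C((size f).-1, 2) * resultant f f^`().

Definition prepared (R : comNzRingType) (e : nat) (f : {poly mps R e.+1}) : Prop :=
  let Delta := ydisc f in
  exists a : nat,
    (forall d, (d < a)%N -> mps_hcomp d Delta = 0) /\
    mps_hcomp a Delta != 0 /\
    mpscoef (mps_hcomp a Delta) (mnm1 ord0 *+ a)%MM != 0.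

(* Substitution g(x_1,...,x_{e+1}) |-> g(X_1, X_2 X_1, ..., X_{e+1} X_1).
   The monomial x^m goes to X_1^(m_1+...+m_{e+1}) X_2^(m_2) ... X_{e+1}^(m_{e+1}),
   so the coefficient of X^b in the image is g_m with
   m = (b_1 - (b_2+...+b_{e+1}), b_2, ..., b_{e+1}) when b_1 >= b_2+...+b_{e+1},
   and 0 otherwise. *)
Definition mps_subst (R : comNzRingType) (e : nat) (g : mps R e.+1) : mps R e.+1 :=
  MPS (fun b : 'X_{1..e.+1} =>
    let s := (\sum_(i < e.+1 | i != ord0) b i)%N in
    if (s <= b ord0)%N then
      mpscoef g [multinom (if i == ord0 then (b ord0 - s)%N else b i) | i < e.+1]
    else 0).

Definition quasi_ordinary (R : comNzRingType) (e : nat) (F : {poly mps R e}) : Prop :=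
  F \is monic /\
  exists (alpha : 'X_{1..e}) (eps : mps R e),
    mps_unit eps /\ ydisc F = @mpsXm R e alpha * eps.

(* Main.v *)
Require Import Defs.
From HB Require Import structures.
From mathcomp Require Import all_boot all_algebra.
From mathcomp Require Import boolp.
From mathcomp Require Import mpoly.
From mathcomp Require Import zify.
Import GRing.Theory.
Local Open Scope ring_scope.
Set Implicit Arguments.
Unset Strict Implicit.

Section A.
Variables (R : comNzRingType) (n : nat).
Implicit Types (f g : mps R n) (p q : {mpoly R[n]}).

Lemma pscoefD f g m : mpscoef (f + g) m = mpscoef f m + mpscoef g m.
Proof. by []. Qed.
Lemma pscoef0 m : mpscoef (0 : mps R n) m = 0.
Proof. by []. Qed.
Lemma pscoefN f m : mpscoef (- f) m = - mpscoef f m.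
Proof. by []. Qed.
Lemma pscoefB f g m : mpscoef (f - g) m = mpscoef f m - mpscoef g m.
Proof. by []. Qed.
Lemma pscoef_sum (I : Type) (r : seq I) (P : pred I) (F : I -> mps R n) m :
  mpscoef (\sum_(i <- r | P i) F i) m = \sum_(i <- r | P i) mpscoef (F i) m.
Proof. by apply: (big_morph (fun f => mpscoef f m)). Qed.
Lemma pscoefM f g m :
  mpscoef (f * g) m = (mps_trunc (mdeg m).+1 f * mps_trunc (mdeg m).+1 g)@_m.
Proof. by []. Qed.
Lemma pscoef1 m : mpscoef (1 : mps R n) m = (m == 0%MM)%:R.
Proof. by []. Qed.

Lemma mps_local f f' g g' m :
  (forall k, (mdeg k <= mdeg m)%N -> mpscoef f k = mpscoef f' k) ->
  (forall k, (mdeg k <= mdeg m)%N -> mpscoef g k = mpscoef g' k) ->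
  mpscoef (f * g) m = mpscoef (f' * g') m.
Proof.
move=> Hf Hg; rewrite !pscoefM; apply: mcoeffM_low => k hk;
  by rewrite !mcoeff_trunc ltnS hk ?Hf ?Hg.
Qed.

Definition mpsP p : mps R n := MPS (fun m => p@_m).

Lemma pscoefP p m : mpscoef (mpsP p) m = p@_m. Proof. by []. Qed.

Lemma pscoefPM p g m D : (mdeg m < D)%N ->
  mpscoef (mpsP p * g) m = (p * mps_trunc D g)@_m.
Proof.
move=> hD; rewrite (mpsM_trunc _ _ hD); apply: mcoeffM_low => k hk //.
by rewrite mcoeff_trunc (leq_ltn_trans hk hD).
Qed.

Lemma mpsPM p q : mpsP (p * q) = mpsP p * mpsP q.
Proof.
apply: mps_ext => m; rewrite pscoefM pscoefP; apply: mcoeffM_low => k hk;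
  by rewrite mcoeff_trunc ltnS hk.
Qed.

Lemma mpsP1 : mpsP 1 = 1.
Proof. by apply: mps_ext => m; rewrite pscoefP mcoeff1 pscoef1. Qed.

Lemma mpsPD p q : mpsP (p + q) = mpsP p + mpsP q.
Proof. by apply: mps_ext => m; rewrite pscoefP mcoeffD. Qed.

Lemma mpsP_prod (I : Type) (r : seq I) (P : pred I) (F : I -> {mpoly R[n]}) :
  mpsP (\prod_(i <- r | P i) F i) = \prod_(i <- r | P i) mpsP (F i).
Proof. exact: (big_morph mpsP mpsPM mpsP1). Qed.

Lemma mpsPX p k : mpsP (p ^+ k) = mpsP p ^+ k.
Proof. by elim: k => [|k IH]; rewrite ?expr0 ?mpsP1 // !exprS mpsPM IH. Qed.

Lemma mpsXmE a : @mpsXm R n a = mpsP 'X_[a].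
Proof.
rewrite mpolyXE_id mpsP_prod /mpsXm; apply: eq_bigr => i _; rewrite mpsPX.
congr (_ ^+ _); apply: mps_ext => m /=; by rewrite mcoeffX eq_sym.
Qed.

Lemma mcoeffXM a q b :
  ('X_[a] * q)@_b = if (a <= b)%MM then q@_(b - a) else 0.
Proof.
case: ifP => hab.
  by rewrite mulrC -{1}(submK hab) addmC mcoeffMX.
rewrite mcoeffM big1 // => k /eqP Hk; rewrite mcoeffX; case: eqP; last by rewrite mul0r.
move=> Ek; have : (a <= b)%MM by rewrite Hk -Ek lem_addr.
by rewrite hab.
Qed.

Definition ordge f k := forall m, (mdeg m < k)%N -> mpscoef f m = 0.

Lemma ordgeM f g i j : ordge f i -> ordge g j -> ordge (f * g) (i + j).
Proof.
move=> Hf Hg m hm; rewrite pscoefM mcoeffM big1 // => k /eqP Hk.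
rewrite !mcoeff_trunc.
have Hd : mdeg m = (mdeg k.1 + mdeg k.2)%N by rewrite {1}Hk mdegD.
case: (ltnP (mdeg k.1) i) => h1.
  by case: ifP => _; rewrite ?Hf ?mul0r.
have h2 : (mdeg k.2 < j)%N.
  by lia.
by case: ifP => _; case: ifP => _; rewrite ?Hg ?mulr0.
Qed.

Lemma ordgeX f k : ordge f 1 -> ordge (f ^+ k) k.
Proof.
move=> H; elim: k => [|k IH]; first by move=> m.
by rewrite exprS -add1n; apply: ordgeM.
Qed.

Lemma sum_stable (F : nat -> R) k N : (k <= N)%N -> (forall j, (k <= j)%N -> F j = 0) ->
  \sum_(j < N) F j = \sum_(j < k) F j.
Proof.
move=> hkN HF; rewrite -(subnKC hkN); elim: (N - k)%N => [|d IH]; first by rewrite addn0.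
by rewrite addnS big_ord_recr /= HF ?leq_addr // addr0.
Qed.

End A.

Section AF.
Variables (R : fieldType) (n : nat).
Lemma mps_unit_const (u : mps R n) : mpscoef u 0%MM != 0 -> mps_unit u.
Proof.
move=> hc; set c := mpscoef u 0%MM.
have cU : c \is a GRing.unit by rewrite unitfE.
set w := 1 - mpsP (c^-1)%:MP * u.
have w0 : ordge w 1.
  move=> m; rewrite ltnS leqn0 mdeg_eq0 => /eqP ->.
  rewrite pscoefB pscoef1 eqxx (pscoefPM _ _ (ltnSn _)) mcoeffCM mcoeff_trunc mdeg0 /=.
  by rewrite mulVr // subrr.
pose v := MPS (fun m => \sum_(j < (mdeg m).+1) mpscoef (w ^+ j) m).
have Hv : (1 - w) * v = 1.
  apply: mps_ext => m.
  pose N := (mdeg m).+1.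
  have tele : forall M, (1 - w) * \sum_(j < M) w ^+ j = 1 - w ^+ M.
    elim=> [|M IH]; first by rewrite big_ord0 mulr0 expr0 subrr.
    by rewrite big_ord_recr /= mulrDr IH mulrBl mul1r exprSr [w * _]mulrC addrA subrK.
  rewrite (@mps_local _ _ _ (1 - w) _ (\sum_(j < N) w ^+ j)) //.
    by rewrite tele pscoefB (ordgeX w0) ?subr0.
  move=> k hk; rewrite pscoef_sum /=; symmetry.
  rewrite (@sum_stable _ (fun j => mpscoef (w ^+ j) k) (mdeg k).+1 N) //.
  by move=> j hj; apply: (ordgeX w0).
exists (v * mpsP (c^-1)%:MP).
have -> : u = mpsP c%:MP * (1 - w).
  rewrite /w opprB addrC subrK mulrA -mpsPM -mpolyCM mulrV // mpsP1 mul1r //.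
by rewrite -mulrA (mulrA (1 - w)) Hv mul1r -mpsPM -mpolyCM mulrV // mpsP1.
Qed.

End AF.

Section B.
Variables (R : comNzRingType) (e : nat).
Local Notation n := e.+1.
Implicit Types (f g : mps R n) (p q : {mpoly R[n]}) (m b : 'X_{1..n}).

Definition ss b := (\sum_(i < n | i != ord0) b i)%N.
Definition pre b := [multinom (if i == ord0 then (b ord0 - ss b)%N else b i) | i < n].
Definition phi m := [multinom (if i == ord0 then mdeg m else m i) | i < n].
Definition lam : n.-tuple {mpoly R[n]} :=
  [tuple (if i == ord0 then 'X_i else 'X_i * 'X_ord0) | i < n].

Lemma mdeg_ss m : mdeg m = (m ord0 + ss m)%N.
Proof. by rewrite mdegE (bigD1 ord0). Qed.

Lemma ss_phi m : ss (phi m) = ss m.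
Proof. by apply: eq_bigr => i /negbTE hi; rewrite mnmE hi. Qed.

Lemma ss_pre b : ss (pre b) = ss b.
Proof. by apply: eq_bigr => i /negbTE hi; rewrite mnmE hi. Qed.

Lemma phi0 m : phi m ord0 = mdeg m.
Proof. by rewrite mnmE eqxx. Qed.

Lemma pre0 b : pre b ord0 = (b ord0 - ss b)%N.
Proof. by rewrite mnmE eqxx. Qed.

Lemma phiK m : pre (phi m) = m.
Proof.
apply/mnmP => i; rewrite mnmE; case: eqP => [->|hi].
  by rewrite ss_phi phi0 mdeg_ss addnK.
by rewrite mnmE; move/eqP/negbTE: hi => ->.
Qed.

Lemma mdeg_pre b : (ss b <= b ord0)%N -> mdeg (pre b) = b ord0.
Proof. by move=> h; rewrite mdeg_ss ss_pre pre0 subnK. Qed.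

Lemma preK b : (ss b <= b ord0)%N -> phi (pre b) = b.
Proof.
move=> h; apply/mnmP => i; rewrite mnmE; case: eqP => [->|hi].
  by rewrite mdeg_pre.
by rewrite mnmE; move/eqP/negbTE: hi => ->.
Qed.

Lemma ss_le_phi m : (ss (phi m) <= phi m ord0)%N.
Proof. by rewrite ss_phi phi0 mdeg_ss leq_addl. Qed.

Lemma mdeg_phi m : (mdeg m <= mdeg (phi m))%N.
Proof. by rewrite [X in (_ <= X)%N]mdeg_ss phi0 leq_addr. Qed.

Lemma comp_lamX m : 'X_[m] \mPo lam = 'X_[phi m].
Proof.
rewrite comp_mpolyX.
pose psi (i : 'I_n) : 'X_{1..n} := if i == ord0 then U_(i)%MM else (U_(i) + U_(ord0))%MM.
have -> : \prod_(i < n) tnth lam i ^+ m i = \prod_(i < n) 'X_[(psi i *+ m i)%MM].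
  apply: eq_bigr => i _; rewrite -mpolyXn tnth_mktuple /psi.
  by case: eqP => _ //; rewrite mpolyXD.
rewrite -(big_morph (fun m : 'X_{1..n} => 'X_[m] : {mpoly R[n]}) (@mpolyXD _ _) (@mpolyX0 _ _)).
congr mpolyX; apply/mnmP => j; rewrite mnm_sumE mnmE.
under eq_bigr => i _ do rewrite mulmnE /psi.
case: eqP => [->|hj].
  rewrite mdegE; apply: eq_bigr => i _.
  case: eqP => [->|hi]; first by rewrite mnm1E eqxx mul1n.
  by rewrite mnmDE !mnm1E eqxx; move/eqP/negbTE: hi => ->; rewrite mul1n.
rewrite (bigD1 j) //= big1 ?addn0.
  move/eqP/negbTE: (hj) => ->; by rewrite mnmDE !mnm1E eqxx eq_sym; move/eqP/negbTE: hj => ->; rewrite addn0 mul1n.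
move=> i /negbTE hij; case: ifP => _; rewrite ?mnmDE !mnm1E hij ?mul0n //.
by rewrite eq_sym; move/eqP/negbTE: hj => ->.
Qed.

Lemma coef_comp p b : (p \mPo lam)@_b = \sum_(m <- msupp p) p@_m * (phi m == b)%:R.
Proof.
rewrite comp_mpolyEX raddf_sum /=; apply: eq_bigr => m _.
by rewrite comp_lamX mcoeffZ mcoeffX.
Qed.

Lemma comp_low p q D b : (forall k, (mdeg k < D)%N -> p@_k = q@_k) -> (mdeg b < D)%N ->
  (p \mPo lam)@_b = (q \mPo lam)@_b.
Proof.
move=> H hb; apply/eqP; rewrite -subr_eq0 -mcoeffB -raddfB coef_comp /=.
rewrite big1 // => m _; case: eqP => [Em|]; last by rewrite mulr0.
rewrite mcoeffB H ?subrr ?mul0r //.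
by apply: leq_ltn_trans hb; rewrite -Em mdeg_phi.
Qed.

Lemma coef_subst f b : mpscoef (mps_subst f) b =
  if (ss b <= b ord0)%N then mpscoef f (pre b) else 0.
Proof. by []. Qed.

Lemma coef_subst_trunc f b D : (mdeg b < D)%N ->
  mpscoef (mps_subst f) b = (mps_trunc D f \mPo lam)@_b.
Proof.
move=> hb; rewrite coef_subst /mps_trunc [X in X@__]raddf_sum /=.
under eq_bigr => k _ do rewrite comp_mpolyZ comp_lamX.
rewrite raddf_sum /=.
under eq_bigr => k _ do rewrite mcoeffZ mcoeffX.
case: ifP => hs.
  have hk : (mdeg (pre b) < D)%N.
    by rewrite mdeg_pre //; apply: leq_ltn_trans hb; rewrite mdeg_ss leq_addr.
  rewrite (bigD1 (BMultinom hk)) //= preK // eqxx mulr1 big1 ?addr0 // => k hk'.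
  case: eqP => [Ek|]; last by rewrite mulr0.
  case/eqP: hk'; apply: val_inj => /=; by rewrite -Ek phiK.
rewrite big1 // => k _; case: eqP => [Ek|]; last by rewrite mulr0.
by move: (ss_le_phi k); rewrite Ek hs.
Qed.

Lemma subst_is_additive : additive (@mps_subst R e).
Proof.
move=> f g; apply: mps_ext => b; rewrite pscoefB !coef_subst.
by case: ifP => _; rewrite ?subr0.
Qed.

Lemma subst_is_multiplicative : multiplicative (@mps_subst R e).
Proof.
apply: pair.
  move=> f g; apply: mps_ext => b.
  set D := (mdeg b).+1.
  rewrite (coef_subst_trunc _ (ltnSn _)) pscoefM.
  rewrite (@comp_low _ (mps_trunc D f * mps_trunc D g) D) //; last first.
    by move=> k hk; rewrite trunc_mpsM_low.
  rewrite rmorphM /=; apply: mcoeffM_low => k hk;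
    by rewrite mcoeff_trunc ltnS hk (coef_subst_trunc _ (leq_ltn_trans hk (ltnSn _))).
apply: mps_ext => b; rewrite (coef_subst_trunc _ (ltnSn _)).
rewrite (@comp_low _ 1 (mdeg b).+1) //.
  by rewrite comp_mpoly1 mcoeff1 pscoef1.
by move=> k hk; rewrite mcoeff_trunc hk mcoeff1.
Qed.

HB.instance Definition _ := GRing.isAdditive.Build (mps R n) (mps R n)
  (@mps_subst R e) subst_is_additive.
HB.instance Definition _ := GRing.isMultiplicative.Build (mps R n) (mps R n)
  (@mps_subst R e) subst_is_multiplicative.

Lemma subst_inj : injective (@mps_subst R e).
Proof.
move=> f g H; apply: mps_ext => m.
have : mpscoef (mps_subst f) (phi m) = mpscoef (mps_subst g) (phi m) by rewrite H.
by rewrite !coef_subst ss_le_phi phiK.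
Qed.

End B.

Lemma map_resultant_size (aR rR : comNzRingType) (f : {rmorphism aR -> rR}) (p q : {poly aR}) :
  size (map_poly f p) = size p -> size (map_poly f q) = size q ->
  f (resultant p q) = resultant (map_poly f p) (map_poly f q).
Proof.
move=> Hp Hq; rewrite /resultant /Sylvester_mx Hp Hq.
rewrite -det_map_mx /= map_col_mx; congr (\det (col_mx _ _));
  by apply: map_lin1_mx => v; rewrite map_poly_rV rmorphM /= map_rVpoly.
Qed.

Lemma ydisc_map (aR rR : comNzRingType) (f : {rmorphism aR -> rR}) (p : {poly aR}) :
  injective f -> ydisc (map_poly f p) = f (ydisc p).
Proof.
move=> inj; have Hs q : size (map_poly f q) = size q by apply: size_map_inj_poly; rewrite ?rmorph0.
rewrite /ydisc rmorphM rmorphXn rmorphN1 Hs deriv_map; congr (_ * _).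
by rewrite map_resultant_size.
Qed.

Theorem mainTheorem15 (K : closedFieldType) (charK0 : [pchar K] =i pred0)
    (e : nat) (f : {poly mps K e.+1}) :
  f \is monic -> prepared f ->
  quasi_ordinary (map_poly (@mps_subst K e) f).
Proof.
move=> mon [a [Hlow [_ Hc]]].
set D := ydisc f in Hlow Hc.
split; first exact: monic_map.
rewrite ydisc_map; last exact: subst_inj.
rewrite -/D.
set sD := mps_subst D.
pose al : 'X_{1..e.+1} := (U_(ord0) *+ a)%MM.
have mdeg_al : mdeg al = a by rewrite mdegMn mdeg1 mul1n.
have phi_al : phi al = al.
  apply/mnmP => i; rewrite mnmE; case: eqP => [->|//].
  by rewrite mdeg_al mulmnE mnm1E eqxx mul1n.
have lowD : forall m, (mdeg m < a)%N -> mpscoef D m = 0.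
  move=> m hm; have := congr1 (fun h => mpscoef h m) (Hlow _ hm).
  by rewrite /= eqxx.
have HcD : mpscoef D al != 0 by move: Hc; rewrite /= mdeg_al eqxx.
pose eps := MPS (fun b => mpscoef sD (b + al)%MM).
exists al, eps; split.
  apply: mps_unit_const; change (mpscoef sD (0 + al)%MM != 0); rewrite add0m /sD coef_subst.
  by rewrite -{1 2 3}phi_al ss_le_phi phiK.
apply: mps_ext => b; rewrite mpsXmE (pscoefPM _ _ (ltnSn _)) mcoeffXM.
case: ifP => hab.
  rewrite mcoeff_trunc ltnS mdegB /=.
  by rewrite submK.
rewrite /sD coef_subst; case: ifP => // hs.
apply: lowD; rewrite mdeg_pre //.
rewrite ltnNge; apply/negP => hb; move/negP: hab; apply; apply/mnm_lepP => i.
rewrite mulmnE mnm1E; case: eqP => [<-|_]; first by rewrite mul1n.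
by rewrite mul0n.
Qed.
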